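(* Let $n\ge 3$ be odd and let $D_{2n}$ be the dihedral group of order $2n$. Every indecomposable cycle set $X$ whose permutation group $G(X)$ is isomorphic to $D_{2n}$ satisfies $|X|=2n$.
   Context: A cycle set is a set $X$ with a binary operation $\cdot$ such that for every $x\in X$ the map $\sigma(x)\colon X\to X$, $y\mapsto x\cdot y$, is bijective, and $(x\cdot y)\cdot(x\cdot z)=(y\cdot x)\cdot(y\cdot z)$ for all $x,y,z\in X$. The permutation group $G(X)$ is the subgroup of the symmetric group on $X$ generated by all $\sigma(x)$, $x\in X$. The cycle set $X$ is indecomposable if $G(X)$ acts transitively on $X$ (equivalently, $X$ is not the disjoint union of two nonempty $G(X)$-invariant subsets). *)

(* Defs.v *)
From mathcomp Require Import all_boot all_fingroup all_solvable.
Set Implicit Arguments. Unset Strict Implicit. Unset Printing Implicit Defensive.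

Definition is_cycle_set (X : finType) (op : X -> X -> X) : Prop :=
  (forall x : X, bijective (op x)) /\
  (forall x y z : X, op (op x y) (op x z) = op (op y x) (op y z)).

Definition sigma_set (X : finType) (op : X -> X -> X) : {set {perm X}} :=
  [set p : {perm X} | [exists x : X, [forall y : X, p y == op x y]]].

Definition perm_group_cs (X : finType) (op : X -> X -> X) : {group {perm X}} :=
  <<sigma_set op>>%G.

Definition indecomposable_cs (X : finType) (op : X -> X -> X) : bool :=
  [transitive perm_group_cs op, on [set: X] | 'P].

(* Main.v *)
Require Import Defs.
From mathcomp Require Import all_boot all_fingroup all_solvable.
Set Implicit Arguments. Unset Strict Implicit. Unset Printing Implicit Defensive.
Import GroupScope.

Lemma abel2n_inv (gT : finGroupType) (A : {group gT}) n :
  abelian A -> odd n -> #|A| = (2 * n)%N ->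
  exists2 t, t \in A & [/\ t != 1, t ^+ 2 = 1 &
    forall u, u \in A -> u ^+ 2 = 1 -> u = 1 \/ u = t].
Proof.
move=> abA oddn oA.
have n0 : (0 < n)%N by case: n oddn {oA}.
have [t At ot] : {t | t \in A & #[t] = 2}.
  by apply: Cauchy => //; rewrite oA dvdn_mulr.
have hallP := nilpotent_pcore_Hall 2 (abelian_nil abA).
have cP : #|'O_2(A)| = 2.
  rewrite (card_Hall hallP) oA partnM // part_pnat_id ?pnat_id //.
  by rewrite part_p'nat ?muln1 // p'natE // dvdn2 oddn.
have memP u : u \in A -> u ^+ 2 = 1 -> u \in 'O_2(A).
  move=> Au u2; rewrite (mem_normal_Hall hallP (pcore_normal _ _) Au).
  have d2 : (#[u] %| 2)%N by rewrite order_dvdn u2.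
  exact: pnat_dvd d2 (pnat_id _).
have t1 : t != 1 by apply/eqP => t1; move: ot; rewrite t1 order1.
have t2 : t ^+ 2 = 1 by apply/eqP; rewrite -order_dvdn ot.
have defP : 'O_2(A) = [set 1; t] :> {set gT}.
  apply/esym/eqP; rewrite eqEcard cP cards2 eq_sym t1 leqnn andbT.
  by apply/subsetP => u /set2P[] ->; rewrite ?group1 // memP.
exists t => //; split=> // u Au u2.
by have := memP u Au u2; rewrite defP => /set2P[]; [left | right].
Qed.

Lemma abel2n_odd (gT : finGroupType) (A : {group gT}) n :
  abelian A -> odd n -> #|A| = (2 * n)%N ->
  #|[set x in A | x ^+ n == 1]| = n.
Proof.
move=> abA oddn oA.
have n0 : (0 < n)%N by case: n oddn {oA}.
have hallP := nilpotent_pcore_Hall 2^' (abelian_nil abA).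
suff -> : [set x in A | x ^+ n == 1] = 'O_2^'(A).
  rewrite (card_Hall hallP) oA partnM // part_p'nat ?pnatNK ?pnat_id // mul1n.
  by rewrite part_pnat_id // p'natE // dvdn2 oddn.
apply/setP => x; rewrite inE; case Ax: (x \in A); last first.
  by apply/esym; apply: contraFF Ax; apply: (subsetP (pcore_sub _ _)).
rewrite /= (mem_normal_Hall hallP (pcore_normal _ _) Ax) /p_elt.
rewrite p'natE // dvdn2 negbK -order_dvdn.
have dx : (#[x] %| 2 * n)%N by rewrite -oA order_dvdG.
apply/idP/idP => [H|H]; first exact: dvdn_odd H oddn.
by rewrite -(Gauss_dvdr _ (_ : coprime #[x] 2)) // coprimen2.
Qed.

Lemma dihedral_facts (gT : finGroupType) (G : {group gT}) n :
  (3 <= n)%N -> odd n -> G \isog 'D_(2 * n) ->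
  exists C : {group gT}, [/\ C \subset G, #|C| = n, #|G| = (2 * n)%N,
     abelian C & (forall c, c \in C -> c ^+ n = 1)] /\
     (forall g c, g \in G -> g \notin C -> c \in C -> c ^ g = c^-1) /\
     (forall a b, a \in G -> b \in G -> a \notin C -> b \notin C -> a^-1 * b \in C).
Proof.
move=> n3 oddn; have n1 : (1 < n)%N by apply: leq_trans n3.
rewrite mul2n.
case/(isoGrpP _ (Grp_dihedral n1)); rewrite card_dihedral // => oG.
case/existsP=> -[x y] /= /eqP[defG xq y2 xy].
have{} defG: <[x]> * <[y]> = G.
  by rewrite -norm_joinEr // norms_cycle xy groupV cycle_id.
have notXy: y \notin <[x]>.
  apply/negP => Xy; have : (#|G| <= n)%N.
    rewrite -defG mulGSid ?cycle_subG //.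
    by rewrite dvdn_leq ?(leq_trans _ n3) // order_dvdn xq.
  by rewrite oG -addnn leqNgt -{1}(addn0 n) ltn_add2l (leq_trans _ n3).
have oy: #[y] = 2 by apply: nt_prime_order => //; apply: contraNneq notXy => ->.
have ox: #[x] = n.
  apply: double_inj; rewrite -muln2 -oy -oG -defG TI_cardMg //.
  by rewrite setIC prime_TIg ?cycle_subG // -orderE oy.
have sCG : <[x]> \subset G by rewrite -defG mulG_subl.
have Gy : y \in G by rewrite -cycle_subG -defG mulG_subr.
have cn c : c \in <[x]> -> c ^+ n = 1.
  by case/cycleP => i ->; rewrite expgAC xq expg1n.
have conj_y c : c \in <[x]> -> c ^ y = c^-1.
  by case/cycleP => i ->; rewrite conjXg xy expgVn.
have dec g : g \in G -> g \notin <[x]> -> exists2 a, a \in <[x]> & g = a * y.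
  move=> Gg nCg; move: Gg; rewrite -defG => /mulsgP[a b Ca Yb def_g].
  move: Yb; rewrite cycle2g // => /set2P[b1|by1].
    by move: nCg; rewrite def_g b1 mulg1 Ca.
  by exists a; rewrite // def_g by1.
have conj_g g c : g \in G -> g \notin <[x]> -> c \in <[x]> -> c ^ g = c^-1.
  move=> Gg nCg Cc; have [a Ca ->] := dec g Gg nCg.
  rewrite conjgM -conj_y //; congr (_ ^ y).
  by rewrite /conjg -(centsP (cycle_abelian x) a Ca c Cc) mulKg.
exists <[x]>%G; split; [split | split] => //.
- exact: cycle_abelian.
move=> a b Ga Gb nCa nCb.
have [a1 Ca1 ->] := dec a Ga nCa; have [b1 Cb1 ->] := dec b Gb nCb.
have -> : (a1 * y)^-1 * (b1 * y) = (a1^-1 * b1) ^ y.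
  by rewrite invMg /conjg !mulgA.
by rewrite conj_y ?groupV ?groupM ?groupV.
Qed.
Section CS.
Variable X : finType.
Variable op : X -> X -> X.
Hypothesis Hcs : is_cycle_set op.

Let inj_op x : injective (op x).
Proof. by case: (proj1 Hcs x) => g H1 _; apply: can_inj H1. Qed.

Definition sg x : {perm X} := perm (@inj_op x).
Lemma sgE x y : sg x y = op x y. Proof. by rewrite permE. Qed.

Local Notation G := (perm_group_cs op).

Lemma sg_in x : sg x \in G.
Proof.
apply: mem_gen; rewrite inE; apply/existsP; exists x; apply/forallP => y.
by rewrite sgE.
Qed.

Lemma sigma_setP p : p \in sigma_set op -> exists x, p = sg x.
Proof.
rewrite inE => /existsP[x /forallP H]; exists x; apply/permP => y.
by rewrite sgE; apply/eqP.
Qed.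

Lemma sg_swap a b : sg a * sg (sg a b) = sg b * sg (sg b a).
Proof.
apply/permP => z; rewrite !permM !sgE; exact: (proj2 Hcs).
Qed.

Definition pi (s : seq X) : {perm X} := foldl (fun (g : {perm X}) y => g * sg (g y)) 1 s.

Lemma pi_nil : pi [::] = 1. Proof. by []. Qed.
Lemma pi_rcons s y : pi (rcons s y) = pi s * sg (pi s y).
Proof. by rewrite /pi foldl_rcons. Qed.
Lemma pi1 y : pi [:: y] = sg y.
Proof. by rewrite /pi /= mul1g perm1. Qed.

Lemma pi_swap s x y : pi (rcons (rcons s x) y) = pi (rcons (rcons s y) x).
Proof.
rewrite !pi_rcons !permM -!mulgA; congr (_ * _); exact: sg_swap.
Qed.

Lemma pi_cat s t : pi (s ++ t) = pi s * pi (map (pi s) t).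
Proof.
elim/last_ind: t => [|t y IH]; first by rewrite cats0 mulg1.
rewrite -rcons_cat map_rcons !pi_rcons IH permM mulgA.
by [].
Qed.

Lemma pi_cons s x : pi (x :: s) = pi (rcons s x).
Proof.
elim/last_ind: s => [//|s y IH].
by rewrite -rcons_cons pi_rcons IH -pi_rcons pi_swap.
Qed.

Lemma pi_catC s t : pi (s ++ t) = pi (t ++ s).
Proof.
elim: s t => [|x s IH] t; first by rewrite cats0.
by rewrite cat_cons pi_cons rcons_cat IH cat_rcons.
Qed.

Lemma pi_in s : pi s \in G.
Proof.
elim/last_ind: s => [|s y IH]; first exact: group1.
by rewrite pi_rcons groupM // sg_in.
Qed.

Lemma pi_surj h : h \in G -> exists s, pi s = h.
Proof.
case/gen_prodgP => k [c Hc ->]; elim: k c Hc => [|k IH] c Hc.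
  by exists [::]; rewrite big_ord0.
rewrite big_ord_recr /=.
have [s Hs] := IH (fun i => c (widen_ord (leqnSn k) i)) (fun i => Hc _).
have [x Hx] := sigma_setP (Hc ord_max).
exists (rcons s ((pi s)^-1 x)); rewrite pi_rcons permKV Hs -Hx.
by congr (_ * _); apply: eq_bigr => i _.
Qed.

Lemma ex_pre h : exists s, (h \in G) ==> (pi s == h).
Proof.
case Hh: (h \in G); last by exists [::].
by have [s Hs] := pi_surj Hh; exists s; rewrite Hs eqxx.
Qed.

Definition pre h := xchoose (ex_pre h).

Lemma pre_pi h : h \in G -> pi (pre h) = h.
Proof. by move=> Hh; have /implyP/(_ Hh)/eqP := xchooseP (ex_pre h). Qed.

Lemma piC1 s s' t : pi s = pi s' -> pi (s ++ t) = pi (s' ++ t).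
Proof. by move=> E; rewrite !pi_cat E. Qed.

Lemma piC2 s s' t : pi s = pi s' -> pi (t ++ s) = pi (t ++ s').
Proof. by move=> E; rewrite pi_catC (piC1 _ E) pi_catC. Qed.

Lemma pre_pi_s s : pi (pre (pi s)) = pi s.
Proof. exact: pre_pi (pi_in s). Qed.


Definition lam (g h : {perm X}) := pi (map g (pre h)).

Lemma lam_pi g t : g \in G -> lam g (pi t) = pi (map g t).
Proof.
move=> Hg; have E1 : pi (pre g ++ t) = g * pi (map g t) by rewrite pi_cat pre_pi.
have E2 : pi (pre g ++ pre (pi t)) = g * lam g (pi t) by rewrite pi_cat pre_pi.
by apply: (mulgI g); rewrite -E1 -E2; apply: piC2; rewrite pre_pi_s.
Qed.

Lemma lam_in g h : lam g h \in G. Proof. exact: pi_in. Qed.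

Lemma lam_sg g x : g \in G -> lam g (sg x) = sg (g x).
Proof. by move=> Hg; rewrite -pi1 lam_pi //= pi1. Qed.

Lemma lam_mul g k h : g \in G -> k \in G -> h \in G ->
  lam (g * k) h = lam k (lam g h).
Proof.
move=> Hg Hk Hh; have -> : lam g h = pi (map g (pre h)) by [].
rewrite lam_pi // /lam -map_comp.
by congr pi; apply: eq_map => y /=; rewrite permM.
Qed.

Lemma lam1 h : h \in G -> lam 1 h = h.
Proof.
move=> Hh; rewrite /lam (eq_map (g := id)) ?map_id ?pre_pi // => y.
by rewrite perm1.
Qed.

Lemma lam_one g : g \in G -> lam g 1 = 1.
Proof. by move=> Hg; rewrite -pi_nil lam_pi. Qed.

Lemma lamK g h : g \in G -> h \in G -> lam g^-1 (lam g h) = h.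
Proof.
by move=> Hg Hh; rewrite -lam_mul ?groupV // mulgV lam1.
Qed.

Lemma lam_inj g : g \in G -> {in G &, injective (lam g)}.
Proof.
by move=> Hg a b Ha Hb E; rewrite -(lamK Hg Ha) E lamK.
Qed.

Definition add (h k : {perm X}) := h * lam h k.

Lemma add_pi s t : add (pi s) (pi t) = pi (s ++ t).
Proof. by rewrite /add lam_pi ?pi_in // pi_cat. Qed.

Lemma addE h k : h \in G -> k \in G -> add h k = pi (pre h ++ pre k).
Proof. by move=> Hh Hk; rewrite -add_pi !pre_pi. Qed.

Lemma add_in h k : h \in G -> add h k \in G.
Proof. by move=> Hh; rewrite groupM // lam_in. Qed.

Lemma addC h k : h \in G -> k \in G -> add h k = add k h.
Proof. by move=> Hh Hk; rewrite !addE // pi_catC. Qed.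

Lemma add1g h : h \in G -> add 1 h = h.
Proof. by move=> Hh; rewrite /add lam1 // mul1g. Qed.

Lemma addg1 h : h \in G -> add h 1 = h.
Proof. by move=> Hh; rewrite /add lam_one // mulg1. Qed.

Lemma addA h k l : h \in G -> k \in G -> l \in G ->
  add (add h k) l = add h (add k l).
Proof.
move=> Hh Hk Hl; rewrite (addE Hh Hk) (addE Hk Hl).
rewrite -{1}(pre_pi Hl) -{2}(pre_pi Hh) !add_pi; by rewrite catA.
Qed.

Lemma lam_add g h k : g \in G -> h \in G -> k \in G ->
  lam g (add h k) = add (lam g h) (lam g k).
Proof.
move=> Hg Hh Hk; rewrite (addE Hh Hk) lam_pi // map_cat -add_pi.
by rewrite -!lam_pi // !pre_pi.
Qed.

Lemma add_cancel h a b : h \in G -> a \in G -> b \in G ->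
  add h a = add h b -> a = b.
Proof.
by move=> Hh Ha Hb /mulgI; apply: lam_inj.
Qed.

Definition tau_fun (h : {perm X}) (a : {perm X}) :=
  if (a \in G) && (h \in G) then add a h else a.

Lemma tau_inj h : injective (tau_fun h).
Proof.
rewrite /tau_fun => a b; case Hh: (h \in G); rewrite ?andbT ?andbF //.
case Ha: (a \in G); case Hb: (b \in G) => //.
- by rewrite !(addC _ Hh) // => /add_cancel; apply.
- by move=> E; move: Hb; rewrite -E add_in.
- by move=> E; move: Ha; rewrite E add_in.
Qed.

Definition E h : {perm {perm X}} := perm (@tau_inj h).

Lemma EE h a : h \in G -> a \in G -> E h a = add a h.
Proof. by move=> Hh Ha; rewrite permE /tau_fun Ha Hh. Qed.

Lemma EE' h a : a \notin G -> E h a = a.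
Proof. by move=> Ha; rewrite permE /tau_fun (negbTE Ha). Qed.

Lemma E_mul h k : h \in G -> k \in G -> E h * E k = E (add h k).
Proof.
move=> Hh Hk; apply/permP => a; rewrite permM.
case Ha: (a \in G); last by rewrite !EE' ?Ha.
by rewrite !EE ?add_in // addA.
Qed.

Lemma E1 : E 1 = 1.
Proof.
apply/permP => a; rewrite perm1; case Ha: (a \in G); last by rewrite EE' ?Ha.
by rewrite EE // addg1.
Qed.

Lemma E_at1 h : h \in G -> E h 1 = h.
Proof. by move=> Hh; rewrite EE // add1g. Qed.

Lemma E_inj : {in G &, injective E}.
Proof. by move=> a b Ha Hb Eab; rewrite -(E_at1 Ha) Eab E_at1. Qed.

Definition T := E @: G.

Lemma T_group_set : group_set T.
Proof.
apply/group_setP; split; first by apply/imsetP; exists 1; rewrite ?E1.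
move=> x y /imsetP[h Hh ->] /imsetP[k Hk ->]; rewrite E_mul //.
by apply/imsetP; exists (add h k); rewrite ?add_in.
Qed.

Definition Tg := Group T_group_set.

Lemma card_T : #|Tg| = #|G|.
Proof. by rewrite /= card_in_imset //; apply: E_inj. Qed.

Lemma abelian_T : abelian Tg.
Proof.
apply/centsP => x /imsetP[h Hh ->] y /imsetP[k Hk ->].
by rewrite /commute !E_mul // addC.
Qed.

Definition nmul m h := iter m (add h) 1.

Lemma nmul_in m h : h \in G -> nmul m h \in G.
Proof. by move=> Hh; elim: m => [|m IH] /=; rewrite ?group1 ?add_in. Qed.

Lemma E_exp h m : h \in G -> E h ^+ m = E (nmul m h).
Proof.
move=> Hh; elim: m => [|m IH]; first by rewrite expg0 E1.
by rewrite expgS IH E_mul ?nmul_in.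
Qed.

Lemma lam_nmul g h m : g \in G -> h \in G -> lam g (nmul m h) = nmul m (lam g h).
Proof.
move=> Hg Hh; elim: m => [|m IH] /=; first by rewrite lam_one.
by rewrite lam_add ?nmul_in // IH.
Qed.

Lemma E_eq1 h : h \in G -> (E h == 1) = (h == 1).
Proof.
move=> Hh; apply/eqP/eqP => [H|->]; last exact: E1.
by apply: E_inj; rewrite ?group1 ?E1.
Qed.

Lemma E_lam_exp g h m : g \in G -> h \in G ->
  (E (lam g h) ^+ m == 1) = (E h ^+ m == 1).
Proof.
move=> Hg Hh; rewrite !E_exp ?lam_in // !E_eq1 ?nmul_in ?lam_in //.
rewrite -lam_nmul //; apply/eqP/eqP => [H|->]; last exact: lam_one.
by apply: (lam_inj Hg); rewrite ?nmul_in ?group1 // lam_one.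
Qed.


Lemma odd_pow (gT : finGroupType) (x : gT) m : odd m -> x ^+ 2 = 1 -> x ^+ m = x.
Proof.
move=> om x2; rewrite -(odd_double_half m) om expgD expg1 -mul2n expgM x2.
by rewrite expg1n mulg1.
Qed.

Variable n : nat.
Hypothesis n3 : (3 <= n)%N.
Hypothesis oddn : odd n.
Variable C : {group {perm X}}.
Hypothesis sCG : C \subset G.
Hypothesis oC : #|C| = n.
Hypothesis oG : #|G| = (2 * n)%N.
Hypothesis abC : abelian C.
Hypothesis Cn : forall c, c \in C -> c ^+ n = 1.
Hypothesis conjC : forall g c, g \in G -> g \notin C -> c \in C -> c ^ g = c^-1.
Hypothesis cosC : forall a b, a \in G -> b \in G -> a \notin C -> b \notin C -> a^-1 * b \in C.

Lemma C_odd c : c \in C -> c ^+ 2 = 1 -> c = 1.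
Proof. by move=> Cc c2; rewrite -(odd_pow oddn c2) Cn. Qed.

Lemma CG c : c \in C -> c \in G.
Proof. exact: (subsetP sCG). Qed.

Lemma E2 u : u \in G -> E u ^+ 2 = E (add u u).
Proof. by move=> Gu; rewrite E_exp //= addg1. Qed.

Lemma r0_ex : exists r0, [/\ r0 \in G, r0 != 1, E r0 ^+ 2 = 1 &
   forall u, u \in G -> E u ^+ 2 = 1 -> u = 1 \/ u = r0].
Proof.
have oT : #|Tg| = (2 * n)%N by rewrite card_T oG.
have [t Tt [t1 t2 tu]] := abel2n_inv abelian_T oddn oT.
have [r0 Gr0 def_t] := imsetP Tt.
exists r0; split => //.
- by rewrite -(E_eq1 Gr0) -def_t.
- by rewrite -def_t.
move=> u Gu u2; have [|] := tu (E u) (imset_f _ Gu) u2.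
  by move/eqP; rewrite E_eq1 // => /eqP; left.
by rewrite def_t => Eu; right; apply: E_inj.
Qed.

Definition Qset := [set h in G | E h ^+ n == 1].

Lemma card_Qset : #|Qset| = n.
Proof.
have oT : #|Tg| = (2 * n)%N by rewrite card_T oG.
have <- := abel2n_odd abelian_T oddn oT.
have -> : [set x in Tg | x ^+ n == 1] = E @: Qset.
  apply/setP => x; apply/idP/imsetP.
    rewrite inE => /andP[/imsetP[h Gh ->] h1]; exists h => //.
    by rewrite inE Gh.
  by case=> h; rewrite !inE => /andP[Gh h1] ->; rewrite h1 imset_f.
rewrite card_in_imset // => a b; rewrite !inE => /andP[Ga _] /andP[Gb _].
exact: E_inj.
Qed.

Lemma Qset_lam g h : g \in G -> h \in G -> (lam g h \in Qset) = (h \in Qset).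
Proof. by move=> Gg Gh; rewrite !inE lam_in Gh E_lam_exp. Qed.

Lemma Qset_add h k : h \in Qset -> k \in Qset -> add h k \in Qset.
Proof.
rewrite !inE => /andP[Gh h1] /andP[Gk k1]; rewrite add_in //= -E_mul //.
rewrite expgMn ?(eqP h1) ?(eqP k1) ?mulg1 //.
by apply: (centsP abelian_T); apply: imset_f.
Qed.

Lemma Qset_mul h k : h \in Qset -> k \in Qset -> h * k \in Qset.
Proof.
move=> Qh Qk; have Gh : h \in G by move: Qh; rewrite inE => /andP[].
have Gk : k \in G by move: Qk; rewrite inE => /andP[].
have -> : h * k = add h (lam h^-1 k).
  by rewrite /add -lam_mul ?groupV // mulVg lam1.
by apply: Qset_add => //; rewrite Qset_lam ?groupV.
Qed.

Lemma Qset_group : group_set Qset.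
Proof.
apply/group_setP; split; first by rewrite inE group1 E1 expg1n eqxx.
by move=> h k; apply: Qset_mul.
Qed.

Definition Qg := Group Qset_group.

Lemma Qset_C : Qset = C :> {set _}.
Proof.
apply/eqP; rewrite eqEcard card_Qset oC leqnn andbT.
apply/subsetP => q Qq; have Gq : q \in G by move: Qq; rewrite inE => /andP[].
apply/negPn/negP => nCq.
have nCq' : q^-1 \notin C by rewrite groupV.
have Cqq : q * q \in C by have := cosC (groupVr Gq) Gq nCq' nCq; rewrite invgK.
have qq1 : q * q = 1.
  apply: C_odd => //; rewrite expgS expg1; apply/eqP; rewrite -eq_invg_mul.
  by rewrite -(conjC Gq nCq Cqq) /conjg !mulgA mulVg mul1g.
have qn : q ^+ n = 1.
  by have := expg_cardG (Qq : q \in Qg); rewrite /= card_Qset.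
have q1 : q = 1 by rewrite -(odd_pow oddn (_ : q ^+ 2 = 1)) // expgS expg1.
by move: nCq; rewrite q1 group1.
Qed.

Lemma QC x : (x \in Qset) = (x \in C).
Proof. by rewrite Qset_C. Qed.

Lemma memC h : h \in G -> (h \in C) = (E h ^+ n == 1).
Proof. by move=> Gh; rewrite -Qset_C inE Gh. Qed.

Section R0.
Variable r0 : {perm X}.
Hypothesis Gr0 : r0 \in G.
Hypothesis r01 : r0 != 1.
Hypothesis r02 : E r0 ^+ 2 = 1.
Hypothesis r0u : forall u, u \in G -> E u ^+ 2 = 1 -> u = 1 \/ u = r0.

Lemma r0_notC : r0 \notin C.
Proof.
rewrite memC // odd_pow //; apply: contra r01; rewrite E_eq1 //.
Qed.

Lemma lam_r0 g : g \in G -> lam g r0 = r0.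
Proof.
move=> Gg; have H2 : E (lam g r0) ^+ 2 = 1 by apply/eqP; rewrite E_lam_exp // r02.
case: (r0u (lam_in g r0) H2) => // H; move: r01; rewrite -(lamK Gg Gr0) H lam_one ?groupV //.
by rewrite eqxx.
Qed.

Lemma lam_r0_conj k : k \in G -> lam r0 k = k ^ r0.
Proof.
move=> Gk; have := addC Gr0 Gk; rewrite /add lam_r0 // => H.
by rewrite /conjg -H mulKg.
Qed.

Lemma lam_r0_C c : c \in C -> lam r0 c = c^-1.
Proof. by move=> Cc; rewrite lam_r0_conj ?conjC ?r0_notC // CG. Qed.

Lemma lam_C g c : g \in G -> c \in C -> lam g c \in C.
Proof. by move=> Gg Cc; rewrite -QC Qset_lam ?QC //; apply: CG. Qed.

Lemma add_inv c : c \in C -> add c c^-1 = 1.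
Proof.
move=> Cc; have Cc' : c^-1 \in C by rewrite groupV.
have Gc := CG Cc; have Gc' := CG Cc'.
have Cu : add c c^-1 \in C by rewrite -QC Qset_add // QC.
apply: C_odd => //; rewrite expgS expg1; apply/eqP; rewrite -eq_invg_mul.
rewrite -(lam_r0_C Cu) lam_add // !lam_r0_C // invgK addC //.
Qed.

Lemma lam_inv g c : g \in G -> c \in C -> lam g c^-1 = (lam g c)^-1.
Proof.
move=> Gg Cc; have Cc' : c^-1 \in C by rewrite groupV.
have Gc := CG Cc; have Gc' := CG Cc'.
apply: (@add_cancel (lam g c)); rewrite ?lam_in ?groupV ?lam_in //.
by rewrite -lam_add  // !add_inv ?lam_one ?lam_C.
Qed.

Lemma lam_invg g c : g \in C -> c \in C -> lam g c = lam g^-1 c.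
Proof.
move=> Cg Cc; have Gg := CG Cg; have Gc := CG Cc.
have e : g * r0 = r0 * g^-1.
  by rewrite -(conjC Gr0 r0_notC Cg) /conjg !mulgA mulgV mul1g.
apply: invg_inj; rewrite -(lam_r0_C (lam_C Gg Cc)) -lam_mul // e lam_mul ?groupV //.
by rewrite lam_r0_C // lam_inv ?groupV.
Qed.

Lemma lam_sq g c : g \in C -> c \in C -> lam (g * g) c = c.
Proof.
move=> Cg Cc; have Gg := CG Cg; have Gc := CG Cc.
by rewrite lam_mul  // lam_invg ?lam_C // lamK .
Qed.

Lemma lam_Cid d c : d \in C -> c \in C -> lam d c = c.
Proof.
move=> Cd Cc; have -> : d = d ^+ (n.+1./2) * d ^+ (n.+1./2).
  have hk : (n.+1./2 + n.+1./2 = n.+1)%N.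
    by rewrite addnn -[RHS]odd_double_half /= oddn.
  by rewrite -expgD hk expgSr Cn // mul1g.
by rewrite lam_sq ?groupX.
Qed.

Lemma sg_C d x : d \in C -> sg (d x) = sg x.
Proof.
move=> Cd; have Gd := CG Cd; rewrite -lam_sg //.
case Cx: (sg x \in C); first by rewrite lam_Cid.
have Ck : (sg x)^-1 * r0 \in C by rewrite cosC ?sg_in ?Cx ?r0_notC.
have -> : sg x = add r0 ((sg x)^-1 * r0).
  by rewrite /add lam_r0_C // invMg invgK mulgA mulgV mul1g.
by rewrite lam_add ?lam_r0 ?lam_Cid //; apply: CG.
Qed.

End R0.

Lemma main_card : indecomposable_cs op -> #|X| = (2 * n)%N.
Proof.
move=> Htr.
have [r0 [Gr0 r01 r02 r0u]] := r0_ex.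
have sgC := sg_C Gr0 r01 r02 r0u.
have notC := r0_notC Gr0 r01 r02.
have [x0 _ defX] := imsetP Htr.
have Horb := card_orbit_stab 'P G x0.
rewrite -defX cardsT oG in Horb.
have inO z : z \in orbit 'P G x0 by rewrite -defX inE.
have stabP h : h \in 'C_G[x0 | 'P] -> h \in G /\ h x0 = x0.
  by move=> /setIP[Gh /astab1P].
have claim1 h : h \in C -> h x0 = x0 -> h = 1.
  move=> Ch hx; apply/permP => z; rewrite perm1.
  have /orbitP[g Gg <-] := inO z; rewrite /=.
  case Cg: (g \in C).
    by rewrite -permM (centsP abC g Cg h Ch) permM hx.
  have nCg' : g^-1 \notin C by rewrite groupV Cg.
  have e : g * h = h^-1 * g.
    have := conjC (groupVr Gg) nCg' Ch; rewrite /conjg invgK => <-.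
    by rewrite mulgA mulgKV.
  by rewrite -permM e permM -{1}hx permK.
have stab1 : 'C_G[x0 | 'P] = 1.
  apply/trivgP/subsetP => h Sh; rewrite inE; apply/eqP.
  have [Gh hx] := stabP h Sh.
  case Ch: (h \in C); first exact: claim1.
  exfalso.
  have cC : 'C_C[x0 | 'P] = 1.
    apply/trivgP/subsetP => k /setIP[Ck /astab1P kx].
    by rewrite inE; apply/eqP; apply: claim1.
  have oCx := card_orbit_stab 'P C x0; rewrite cC cards1 muln1 oC in oCx.
  have h1 : h != 1 by apply: contraFneq Ch => ->; rewrite group1.
  have st2 : (2 <= #|'C_G[x0 | 'P]|)%N.
    have <- : #|[set 1; h]| = 2 by rewrite cards2 eq_sym h1.
    apply: subset_leq_card.
    by apply/subsetP => u /set2P[] ->; rewrite ?group1.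
  have leX : (#|X| <= n)%N.
    have H : (#|X| * 2 <= 2 * n)%N by rewrite -Horb leq_mul2l st2 orbT.
    by rewrite mulnC leq_pmul2l in H.
  have defC : orbit 'P C x0 = [set: X].
    by apply/eqP; rewrite eqEcard subsetT cardsT oCx.
  have sgc z : sg z = sg x0.
    have : z \in orbit 'P C x0 by rewrite defC inE.
    by case/orbitP => d Cd <-; apply: sgC.
  have abG : abelian G.
    apply: abelianS (cycle_abelian (sg x0)).
    rewrite gen_subG; apply/subsetP => p /sigma_setP[z ->].
    by rewrite sgc cycle_id.
  have [c Cc c1] : exists2 c, c \in C & c != 1.
    apply/trivgPn; rewrite trivg_card1 oC; apply: contraTneq n3 => ->.
    by [].
  have e1 : c ^ r0 = c.
    by rewrite /conjg -(centsP abG r0 Gr0 c (CG Cc)) mulKg.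
  have e2 := conjC Gr0 notC Cc; rewrite e1 in e2.
  apply: (negP c1); apply/eqP; apply: C_odd => //.
  by rewrite expgS expg1 {1}e2 mulVg.
by move: Horb; rewrite stab1 cards1 muln1.
Qed.
End CS.

Close Scope group_scope.

Theorem theorem2 (n : nat) (X : finType) (op : X -> X -> X) :
  3 <= n -> odd n ->
  is_cycle_set op ->
  indecomposable_cs op ->
  perm_group_cs op \isog 'D_(2 * n) ->
  #|X| = (2 * n)%N.
Proof.
move=> n3 oddn Hcs Htr Hiso.
have [C [[sCG oC oG abC Cn] [conjC cosC]]] := dihedral_facts n3 oddn Hiso.
exact: (main_card Hcs n3 oddn sCG oC oG abC Cn conjC cosC Htr).
Qed.
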